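(* Let $R$ be a commutative ring, let $n=2^m$ with $m\ge 0$, and let $A=\sum_{i=0}^{n-1}a_ix^i$ and $B=\sum_{i=0}^{n-1}b_ix^i$ be polynomials in $R[x]$. Consider the recursion tree for the product $AB$ built with the interleaved splitting scheme (described in the context). Let $K$ be a direct leaf node, reached from the root by the path with labels $d_1d_2\dots d_m$, where every $d_i\in\{0,1\}$ ($d_1$ is the label of the edge leaving the root). Then the contribution of $K$ is $$\frac{1-x^{2^m}}{1-x}\,a_r b_r\,x^r,\qquad\text{where } r=\sum_{i=1}^m d_i 2^{i-1},$$ i.e. $r$ is the integer whose binary expansion is $d_m d_{m-1}\dots d_2d_1$. Here $\frac{1-x^{2^m}}{1-x}$ denotes the polynomial $1+x+\dots+x^{2^m-1}$.
   Context: Recursion tree. Each node carries a triple $(P,Q,X)$, where $X=x^{2^{i}}$ at depth $i$ and $P,Q$ are polynomials in $X$; the root is $(A,B,x)$. For a node $(P,Q,X)$ at depth $i<m$, write $P=P_1X+P_0$ and $Q=Q_1X+Q_0$, where $P_0,P_1,Q_0,Q_1$ are polynomials in $X^2$ (interleaved splitting: $P_0$ collects the monomials of $P$ whose exponent in $X$ is even, $P_1X$ those whose exponent is odd). Using the identity $PQ=(X+1)P_0Q_0+X(X+1)P_1Q_1-X(P_1-P_0)(Q_1-Q_0)$, the node has three children: the edge labelled 0 leads to $(P_0,Q_0,X^2)$ with edge weight $X+1$; the edge labelled 1 leads to $(P_1,Q_1,X^2)$ with edge weight $X(X+1)$; the edge labelled 2 leads to $(P_1-P_0,Q_1-Q_0,X^2)$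 with edge weight $-X$. Nodes at depth $m$ are leaves; their $P,Q$ are constants. The contribution of a leaf is the product of the edge weights along the path from the root to it, multiplied by the product $PQ$ of the two constants it carries. $AB$ is the sum of the contributions of all leaves. A node is direct if the path from the root to it contains no edge labelled 2. *)

(* Defs.v *)
From mathcomp Require Import all_boot all_order all_algebra.
Set Implicit Arguments. Unset Strict Implicit. Unset Printing Implicit Defensive.
Import GRing.Theory.
Local Open Scope ring_scope.

(* A node at depth i carries (P, Q, X) with X = x^(2^i); P and Q are
   polynomials in X, represented here as elements of {poly R} in an abstract
   variable standing for X.  Writing P = P1 X + P0 with P0, P1 polynomials in
   X^2, we have P0 = even_poly P and P1 = odd_poly P (both as polynomials in
   the variable standing for X^2). *)

Section Tree.
Variable R : comNzRingType.

Definition child_P (l : 'I_3) (P : {poly R}) : {poly R} :=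
  match val l with
  | 0 => even_poly P
  | 1 => odd_poly P
  | _ => odd_poly P - even_poly P
  end.

Definition edge_weight (l : 'I_3) : {poly R} :=
  match val l with
  | 0 => 'X + 1
  | 1 => 'X * ('X + 1)
  | _ => - 'X
  end.

(* Contribution (as a polynomial in x) of the leaf reached from the node
   (P, Q, x^(2^i)) at depth i by following the labels d: the product of the
   edge weights along the path (each weight evaluated at X = x^(2^j) for the
   depth j of its source node), times the product P*Q carried by the leaf
   (P, Q being polynomials in x^(2^(i + size d)), constant at the leaves). *)
Fixpoint contrib (i : nat) (P Q : {poly R}) (d : seq 'I_3) : {poly R} :=
  match d with
  | [::] => (P * Q) \Po 'X^(2 ^ i)
  | l :: d' => (edge_weight l \Po 'X^(2 ^ i))
                 * contrib i.+1 (child_P l P) (child_P l Q) d'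
  end.

Definition leaf_contrib (A B : {poly R}) (d : seq 'I_3) : {poly R} :=
  contrib 0 A B d.

Definition direct (d : seq 'I_3) : bool := all (fun l : 'I_3 => val l < 2)%N d.

End Tree.

(* Main.v *)
Require Import Defs.
From mathcomp Require Import all_boot all_order all_algebra.
From mathcomp Require Import zify ring.
Import GRing.Theory.
Local Open Scope ring_scope.

Definition rr (d : seq 'I_3) : nat := (\sum_(j < size d) val (nth ord0 d j) * 2 ^ j)%N.

Lemma rr_cons l d : rr (l :: d) = (val l + (rr d).*2)%N.
Proof.
rewrite /rr /= big_ord_recl /= muln1 -mul2n big_distrr /=; congr (_ + _)%N.
by apply: eq_bigr => j _; rewrite /bump /= expnS add0n mulnCA.
Qed.

Lemma contrib_direct (R : comNzRingType) (d : seq 'I_3) : forall i (P Q : {poly R}),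
  direct d -> (size P <= 2 ^ size d)%N -> (size Q <= 2 ^ size d)%N ->
  contrib i P Q d = (\prod_(j < size d) ('X^(2 ^ (i + j)) + 1))
     * (P`_(rr d) * Q`_(rr d))%:P * 'X^(2 ^ i * rr d).
Proof.
elim: d => [|l d IH] i P Q /=.
  move=> _ hP hQ; rewrite big_ord0 mul1r /rr big_ord0 muln0 expr0 mulr1.
  by rewrite (size1_polyC hP) (size1_polyC hQ) -polyCM comp_polyC !coefC.
move=> /andP[hl hd] hP hQ.
have hu : forall n k, (n <= 2^k.+1)%N -> (uphalf n <= 2^k)%N.
  by move=> n k; rewrite expnS uphalf_half; lia.
have hh : forall n k, (n <= 2^k.+1)%N -> (n./2 <= 2^k)%N.
  by move=> n k; rewrite expnS; lia.
rewrite big_ord_recl /= addn0 rr_cons.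
case: l hl => [[|[|l]] Hl] //= _; rewrite /edge_weight /child_P /=.
- rewrite IH //; try by apply: leq_trans (size_even_poly _) _; apply: hu.
  rewrite !coef_even_poly add0n.
  rewrite comp_polyD comp_polyX comp_polyC.
  have -> : \prod_(i0 < size d) ('X^(2 ^ (i.+1 + i0)) + 1)
          = \prod_(i0 < size d) ('X^(2 ^ (i + bump 0 i0)) + 1) :> {poly R}.
    by apply: eq_bigr => j _; rewrite /bump /= addSnnS add1n.

  have -> : (2 ^ i * (rr d).*2 = 2 ^ i.+1 * rr d)%N by rewrite expnS -mul2n mulnA (mulnC (2 ^ i)%N).
  ring.
- rewrite IH //; try by apply: leq_trans (size_odd_poly _) _; apply: hh.
  rewrite !coef_odd_poly add1n.
  rewrite comp_polyM comp_polyD comp_polyX comp_polyC.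
  have -> : \prod_(i0 < size d) ('X^(2 ^ (i.+1 + i0)) + 1)
          = \prod_(i0 < size d) ('X^(2 ^ (i + bump 0 i0)) + 1) :> {poly R}.
    by apply: eq_bigr => j _; rewrite /bump /= addSnnS add1n.
  have -> : (2 ^ i * (1 + (rr d).*2) = 2 ^ i + 2 ^ i.+1 * rr d)%N by rewrite mulnDr muln1 expnS -mul2n mulnA (mulnC (2 ^ i)%N).
  rewrite exprD; ring.
Qed.

Lemma prod_sum (R : comNzRingType) m :
  \prod_(j < m) ('X^(2 ^ j) + 1) = \sum_(j < 2 ^ m) 'X^j :> {poly R}.
Proof.
elim: m => [|m IH]; first by rewrite big_ord0 expn0 big_ord1.
rewrite big_ord_recr /= IH -!(big_mkord xpredT (fun j => 'X^j)).
rewrite expnS mul2n -addnn (big_cat_nat _ (leq_addr _ _)) //=.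
rewrite [X in _ = _ + X](_ : _ = \sum_(0 <= i < 2 ^ m) 'X^(i + 2 ^ m)); last first.
  by rewrite -{1}[(2 ^ m)%N]add0n big_addn addnK.
rewrite mulrDr mulr1 addrC; congr (_ + _).
rewrite big_distrl /=; apply: eq_bigr => j _.
by rewrite -exprD addnC.
Qed.

Theorem lemma1 (R : comNzRingType) (m : nat) (A B : {poly R}) (d : seq 'I_3) :
  (size A <= 2 ^ m)%N -> (size B <= 2 ^ m)%N ->
  size d = m -> direct d ->
  let r := (\sum_(i < m) val (nth ord0 d i) * 2 ^ i)%N in
  leaf_contrib A B d =
    (\sum_(j < 2 ^ m) 'X^j) * (A`_r * B`_r)%:P * 'X^r.
Proof.
move=> hA hB hd dd r; rewrite /leaf_contrib contrib_direct ?hd //.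
rewrite -prod_sum expn0 mul1n /r /rr hd.
by congr (_ * _ * _); apply: eq_bigr => j _; rewrite add0n.
Qed.
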